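(* Let $G'$ be an antipodal partial cube of rank $r$ and let $G$ be a halfspace of $G'$ (so $G$ is an affine partial cube). Then $G$ has rank at most $r-1$.
   Context: Hypercube $Q_n$: vertex set $\{+,-\}^n$, adjacency = differing in one coordinate. A partial cube is an isometric subgraph $G'$ of $Q_n$ with $n$ minimal; its edges split into $\Theta$-classes $E_f$ (edges flipping coordinate $f$), and the halfspaces $E_f^{+},E_f^{-}$ are the subgraphs induced by the vertices whose coordinate $f$ is $+$, resp. $-$. $G'$ is antipodal if for each vertex the vertex with all coordinates flipped also belongs to $G'$. An affine partial cube is a halfspace of an antipodal partial cube. The contraction $\pi_f$ contracts all edges of $E_f$; the rank of a partial cube is the largest $r$ such that $Q_r$ can be obtained from it by a sequence of contractions. *)

(* Defs.v *)
From mathcomp Require Import all_boot.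
Set Implicit Arguments. Unset Strict Implicit. Unset Printing Implicit Defensive.

(* Vertices of the hypercube Q_n: sign vectors {+,-}^n, encoded with
   true = + and false = -. *)
Definition cube (n : nat) := {ffun 'I_n -> bool}.

Definition hamming n (x y : cube n) : nat := #|[set i | x i != y i]|.
Definition adj n (x y : cube n) : bool := hamming x y == 1.

Definition isometric n (V : {set cube n}) : Prop :=
  forall x y, x \in V -> y \in V ->
    exists p : seq (cube n),
      [/\ path (@adj n) x p, last x p = y, all (mem V) p & size p = hamming x y].

(* Partial cube: isometric subgraph of Q_n with n minimal, i.e. every
   coordinate takes both values on V (every Theta-class is nonempty). *)
Definition partial_cube n (V : {set cube n}) : Prop :=
  isometric V /\ forall f : 'I_n, exists x y, [/\ x \in V, y \in V, x f & ~~ y f].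

Definition antipode n (x : cube n) : cube n := [ffun i => ~~ x i].

Definition antipodal n (V : {set cube n}) : Prop :=
  forall x, x \in V -> antipode x \in V.

(* Halfspace E_f^b: vertices whose coordinate f equals b (b = true is E_f^+). *)
Definition halfspace n (V : {set cube n}) (f : 'I_n) (b : bool) : {set cube n} :=
  [set x in V | x f == b].

(* Contraction pi_f: contract all edges flipping coordinate f.  We realize it
   by forgetting coordinate f (setting it to a constant), which gives a graph
   isomorphic to the one obtained by deleting coordinate f. *)
Definition forget n (f : 'I_n) (x : cube n) : cube n :=
  [ffun i => if i == f then false else x i].
Definition contract n (f : 'I_n) (V : {set cube n}) : {set cube n} :=
  [set forget f x | x in V].

Definition contract_seq n (fs : seq 'I_n) (V : {set cube n}) : {set cube n} :=
  foldr (@contract n) V fs.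

Definition iso_to_cube n (W : {set cube n}) (r : nat) : Prop :=
  exists h : cube r -> cube n,
    [/\ injective h, W = [set h x | x in [set: cube r]]
      & forall x y, adj (h x) (h y) = adj x y].

Definition has_rank n (V : {set cube n}) (r : nat) : Prop :=
  (exists fs, iso_to_cube (contract_seq fs V) r) /\
  (forall fs m, iso_to_cube (contract_seq fs V) m -> m <= r).

(* Main.v *)
Require Import Defs.
From mathcomp Require Import all_boot.
Set Implicit Arguments. Unset Strict Implicit. Unset Printing Implicit Defensive.

Definition flip n (i : 'I_n) (x : cube n) : cube n := [ffun k => (k == i) (+) x k].

Lemma flipE n (i k : 'I_n) x : flip i x k = (k == i) (+) x k.
Proof. by rewrite ffunE. Qed.

Lemma flipK n (i : 'I_n) : involutive (flip i).
Proof. by move=> x; apply/ffunP=> k; rewrite !flipE addbA addbb. Qed.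

Lemma flipC n (i j : 'I_n) x : flip i (flip j x) = flip j (flip i x).
Proof. by apply/ffunP=> k; rewrite !flipE !addbA [(_ == i) (+) _]addbC. Qed.

Lemma adjP n (x y : cube n) : reflect (exists i, y = flip i x) (adj x y).
Proof.
apply: (iffP idP).
  rewrite /adj /hamming => /cards1P [i Hi]; exists i; apply/ffunP=> k.
  move/setP: Hi => /(_ k); rewrite !inE flipE => <-.
  by case: (x k); case: (y k).
case=> i ->; rewrite /adj /hamming; apply/cards1P; exists i.
by apply/setP=> k; rewrite !inE flipE; case: (x k); case: (k == i).
Qed.

Lemma adj_flip n (i : 'I_n) x : adj x (flip i x).
Proof. by apply/adjP; exists i. Qed.

Lemma square n (p q s t : 'I_n) (a : cube n) :
  flip s (flip p a) = flip t (flip q a) -> flip s (flip p a) <> a -> p != q ->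
  flip s (flip p a) = flip p (flip q a).
Proof.
move=> E Hca Hpq.
have Htq : t != q.
  apply/eqP=> Etq; apply: Hca; by rewrite E Etq flipK.
have Hsq : s = q.
  have := congr1 (fun c : cube n => c q) E; rewrite !flipE eqxx (eq_sym q t) (negbTE Htq) (eq_sym q p) (negbTE Hpq).
  by case: eqP => // _; case: (a q).
by rewrite Hsq flipC.
Qed.

Definition zero m : cube m := [ffun _ => false].

Lemma cube_ind m (P : cube m -> Prop) : P (zero m) ->
  (forall (x : cube m) (k : 'I_m), x k = false -> P x -> P (flip k x)) -> forall x, P x.
Proof.
move=> P0 PS x.
move Hs : #|[set i | x i]| => s; elim: s x Hs => [|s IH] x Hs.
  suff -> : x = zero m by [].
  apply/ffunP=> k; rewrite ffunE; apply/negbTE/negP => xk.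
  by have := card0_eq Hs k; rewrite inE xk.
have : 0 < #|[set i | x i]| by rewrite Hs.
case/card_gt0P=> k; rewrite inE => xk.
rewrite -(flipK k x); apply: PS; first by rewrite flipE eqxx xk.
apply: IH; have : [set i | flip k x i] = [set i | x i] :\ k.
  by apply/setP=> i; rewrite !inE flipE; case: eqP => [->|]; rewrite ?xk.
move=> ->; rewrite (cardsD1 k) inE xk in Hs.
by move: Hs; rewrite add1n => -[].
Qed.

Lemma structure m n (h : cube m -> cube n) : injective h ->
  (forall x y, adj (h x) (h y) = adj x y) ->
  exists phi : 'I_m -> 'I_n, injective phi /\
    forall x j, h x (phi j) = h (zero m) (phi j) (+) x j.
Proof.
move=> hinj hadj.
have : forall j : 'I_m, exists i, h (flip j (zero m)) = flip i (h (zero m)).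
  by move=> j; apply/adjP; rewrite hadj adj_flip.
case/fin_all_exists => phi Hphi.
have phiinj : injective phi.
  move=> j k E; have := Hphi j; rewrite E -Hphi => /hinj /ffunP /(_ j).
  by rewrite !flipE eqxx ffunE eq_sym; case: eqP.
have Q : forall (x : cube m) (j : 'I_m), x j = false -> h (flip j x) = flip (phi j) (h x).
  elim/cube_ind => [|x k xk IH] j.
    by move=> _; rewrite Hphi.
  rewrite flipE; case: eqP => [->|/eqP jk]; first by rewrite xk.
  rewrite addFb => xj.
  rewrite IH // [flip j (flip k x)]flipC.
  have Hb := IH j xj.
  have /adjP [s Hs] : adj (h (flip j x)) (h (flip k (flip j x))) by rewrite hadj adj_flip.
  have xjk : (flip j x) k = false by rewrite flipE (eq_sym k j) (negbTE jk).
  have /adjP [t Ht] : adj (h (flip k x)) (h (flip k (flip j x))).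
    by rewrite flipC hadj adj_flip.
  rewrite IH // in Ht; rewrite Hb in Hs.
  have pjk : phi j != phi k by apply: contra jk => /eqP /phiinj ->.
  rewrite Hs; apply: (square (t := t)) => //.
    by rewrite -Hs.
  rewrite -Hs => /hinj /ffunP /(_ j).
  by rewrite !flipE eqxx (negbTE jk) xj.
exists phi; split => //.
pose h0 := h (zero m).
have -> : h (zero m) = h0 by [].
move=> x; elim/cube_ind: x => [j|x k xk IH j]; first by rewrite ffunE addbF.
rewrite Q // !flipE IH (inj_eq phiinj).
by case: (j == k); case: (h0 _); case: (x j).
Qed.

Definition forgets n (fs : seq 'I_n) (x : cube n) : cube n :=
  [ffun i => if i \in fs then false else x i].

Lemma contract_seqE n (fs : seq 'I_n) V :
  contract_seq fs V = [set forgets fs x | x in V].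
Proof.
elim: fs => [|a fs IH] /=.
  apply/setP=> y; apply/idP/imsetP => [yV|[x xV ->]].
    by exists y => //; apply/ffunP=> i; rewrite ffunE.
  suff -> : forgets [::] x = x by [].
  by apply/ffunP=> i; rewrite ffunE.
rewrite IH /contract -imset_comp; apply: eq_imset => x /=.
apply/ffunP=> i; rewrite !ffunE in_cons; case: eqP => //= _.
Qed.

Definition supp_on m n (psi : 'I_m -> 'I_n) : {set cube n} :=
  [set y : cube n | [forall i, ~~ [exists j, psi j == i] ==> ~~ y i]].

Lemma emb_iso m n (psi : 'I_m -> 'I_n) : injective psi ->
  iso_to_cube (supp_on psi) m.
Proof.
move=> pinj.
pose emb (x : cube m) : cube n := [ffun i => [exists j, (psi j == i) && x j]].
have embE : forall x j, emb x (psi j) = x j.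
  move=> x j; rewrite ffunE; apply/existsP/idP => [[j' /andP [/eqP /pinj -> //]]|xj].
  by exists j; rewrite eqxx.
have embN : forall x i, ~~ [exists j, psi j == i] -> emb x i = false.
  move=> x i /existsPn H; rewrite ffunE; apply/existsP => -[j /andP [E _]].
  by have := H j; rewrite E.
exists emb; split.
- by move=> x y E; apply/ffunP=> j; rewrite -!embE E.
- apply/setP=> y; rewrite inE; apply/idP/imsetP => [/forallP H|[x _ ->]].
    exists [ffun j => y (psi j)]; first by [].
    apply/ffunP=> i; case: (boolP [exists j, psi j == i]) => [/existsP [j /eqP <-]|Hn].
      by rewrite embE ffunE.
    by rewrite embN //; have := H i; rewrite Hn /= => /negbTE.
  apply/forallP=> i; apply/implyP=> Hn; by rewrite embN.
- move=> x y; rewrite /adj /hamming.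
  suff -> : [set i | emb x i != emb y i] = psi @: [set j | x j != y j].
    by rewrite card_imset.
  apply/setP=> i; rewrite inE; case: (boolP [exists j, psi j == i]) => [/existsP [j /eqP <-]|Hn].
    by rewrite !embE mem_imset ?inE.
  rewrite !embN //; symmetry; apply/negbTE/imsetP => -[j _ E].
  by move/existsP: Hn; apply; exists j; rewrite E.
Qed.

Lemma in_supp_on m n (psi : 'I_m -> 'I_n) y :
  (y \in supp_on psi) = [forall i, ~~ [exists j, psi j == i] ==> ~~ y i].
Proof. by rewrite inE. Qed.

Lemma negb_neq (c d : bool) : c != d -> ~~ c = d.
Proof. by case: c; case: d. Qed.
Lemma bool_nfix (c : bool) : c = ~~ c -> False.
Proof. by case: c. Qed.

Theorem mainTheorem17 (n : nat) (V : {set cube n}) (r : nat) :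
  partial_cube V -> antipodal V -> has_rank V r ->
  forall (f : 'I_n) (b : bool) (r' : nat),
    has_rank (halfspace V f b) r' -> r'.+1 <= r.
Proof.
move=> _ Hanti [_ Hmax] f b r' [[fs [h [hinj HW hadj]]] _].
have [phi [phiinj Hphi]] := structure hinj hadj.
set h0 := h (zero r') in Hphi.
rewrite contract_seqE in HW.
have inW : forall x, exists2 z, z \in halfspace V f b & h x = forgets fs z.
  move=> x; have : h x \in [set h x | x in [set: cube r']] by apply: imset_f.
  by rewrite -HW => /imsetP.
have hf : forall x, h x f = if f \in fs then false else b.
  move=> x; have [z] := inW x; rewrite inE => /andP [_ /eqP zf] ->.
  by rewrite ffunE zf.
have Hej : forall j, h (flip j (zero r')) (phi j) = ~~ h0 (phi j).
  by move=> j; rewrite Hphi flipE eqxx ffunE; case: (h0 _).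
have phi_nfs : forall j, phi j \notin fs.
  move=> j; apply/negP=> jfs; have := Hej j.
  have [z1 _ ->] := inW (flip j (zero r')); have [z2 _ E2] := inW (zero r').
  by rewrite /h0 E2 !ffunE jfs.
have phi_nf : forall j, phi j != f.
  move=> j; apply/eqP=> E; have := Hej j; rewrite /h0 E !hf.
  exact: bool_nfix.
pose psi (k : 'I_r'.+1) := if unlift ord_max k is Some j then phi j else f.
have psiinj : injective psi.
  move=> k1 k2; rewrite /psi.
  case: unliftP => [j1 ->|->]; case: unliftP => [j2 ->|->] //.
  - by move/phiinj ->.
  - by move=> E; have := phi_nf j1; rewrite E eqxx.
  - by move=> E; have := phi_nf j2; rewrite E eqxx.
pose keep i := [exists k, psi k == i].
pose gs := [seq i <- enum 'I_n | ~~ keep i].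
have gsE : forall i, (i \in gs) = ~~ keep i.
  by move=> i; rewrite mem_filter mem_enum andbT.
have keepf : keep f.
  by apply/existsP; exists ord_max; rewrite /psi unlift_none.
have key : forall y, y \in supp_on psi -> y f = b ->
    exists2 z, z \in halfspace V f b & forgets gs z = y.
  move=> y; rewrite in_supp_on => /forallP ys yf.
  have [z zH E] := inW [ffun j => y (phi j) (+) h0 (phi j)].
  exists z => //; apply/ffunP=> i; rewrite ffunE gsE.
  case: (boolP (keep i)) => [/existsP [k /eqP <-]|Hn] /=.
    rewrite /psi; case: unliftP => [j _|_].
      have := congr1 (fun c : cube n => c (phi j)) E.
      rewrite /= ffunE (negbTE (phi_nfs j)) Hphi ffunE => <-.
      by case: (h0 _); case: (y _).
    by move: zH; rewrite inE => /andP [_ /eqP ->].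
  by have := ys i; rewrite Hn /= => /negbTE.
have HV : contract_seq gs V = supp_on psi.
  rewrite contract_seqE; apply/setP=> y; apply/imsetP/idP.
    case=> x _ ->; rewrite in_supp_on; apply/forallP=> i; apply/implyP=> Hn.
    by rewrite ffunE gsE Hn.
  move=> ys; case: (boolP (y f == b)) => [/eqP yf|ynf].
    have [z zH <-] := key y ys yf; exists z => //.
    by move: zH; rewrite inE => /andP [].
  pose y' : cube n := [ffun i => keep i (+) y i].
  have y's : y' \in supp_on psi.
    have ysF := ys; rewrite in_supp_on in ysF. rewrite in_supp_on.
    apply/forallP=> i; apply/implyP=> Hn; move/forallP: ysF => ysF.
    by rewrite ffunE /keep (negbTE Hn) /=; have := ysF i; rewrite Hn.
  have y'f : y' f = b by rewrite ffunE keepf; exact: negb_neq.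
  have [z zH E] := key y' y's y'f.
  exists (antipode z); first by apply: Hanti; move: zH; rewrite inE => /andP [].
  apply/ffunP=> i; rewrite !ffunE gsE.
  case: (boolP (keep i)) => Hk /=.
    have := congr1 (fun c : cube n => c i) E.
    by rewrite /= !ffunE gsE Hk /= => ->; case: (y i).
  by rewrite in_supp_on in ys; move/forallP: ys => /(_ i); rewrite Hk /= => /negbTE.
apply: (Hmax gs); rewrite HV; exact: emb_iso.
Qed.
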